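(* Let $q$ be a prime power with $q=3m+1$, and let $a\in D_1^3\cup D_2^3$. Let $$M=\begin{pmatrix}1&a^2&a\\ a^{-2}&1&a^{-1}\\ a^{-1}&a&1\end{pmatrix}.$$ Then the $3\times 3$ block matrix whose $(i,j)$ block is $C_{M_{ij}}$ is the adjacency matrix of a directed strongly regular graph with parameters $(3(3m+1),\ 3m,\ m,\ m-1,\ m)$.
   Context: Fix a primitive element $\gamma$ of $\mathbb{F}_q$; $D_i^e=\gamma^i\langle\gamma^e\rangle$ ($e\mid q-1$) are the cyclotomic classes, here with $e=3$. For $\sigma\in\mathbb{F}_q^*$, $C_\sigma$ is the $q\times q$ $0$-$1$ matrix with rows and columns indexed by $\mathbb{F}_q$ and $(C_\sigma)_{x,y}=1$ iff $x\in\sigma y+D_0^e$. A directed strongly regular graph with parameters $(v,k,t,\lambda,\mu)$ is a digraph (no loops, no multiple arcs) on $v$ vertices whose adjacency matrix $A$ satisfies $A^2=tI+\lambda A+\mu(J-I-A)$ and $AJ=JA=kJ$. *)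

(* Defs.v *)
From HB Require Import structures.
From mathcomp Require Import all_boot all_order all_algebra all_field.
Set Implicit Arguments. Unset Strict Implicit. Unset Printing Implicit Defensive.
Import GRing.Theory.
Local Open Scope ring_scope.

(* Cyclotomic class D_i^e = gamma^i <gamma^e> in F_q^*.  Exponents k range over
   0..q-1, which covers all of <gamma^e> since gamma has order q-1. *)
Definition cyc_class (F : finFieldType) (gamma : F) (e i : nat) : {set F} :=
  [set x : F | [exists k : 'I_#|F|, x == gamma ^+ (i + e * k)%N]].

Definition Centry (F : finFieldType) (gamma : F) (e : nat) (sigma x y : F) : bool :=
  (x - sigma * y) \in cyc_class gamma e 0.

Definition adj_mx (V : finType) (R : V -> V -> bool) : 'M[int]_#|V| :=
  \matrix_(i, j) (R (enum_val i) (enum_val j))%:R.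

Definition is_dsrg (n : nat) (A : 'M[int]_n) (v k t l mu : nat) : Prop :=
  [/\ n = v,
      (forall i j, A i j = 0 \/ A i j = 1) /\ (forall i, A i i = 0),
      A *m A = t%:R%:M + l%:R *: A + mu%:R *: ((const_mx 1 : 'M[int]_n) - 1%:M - A),
      A *m (const_mx 1 : 'M[int]_n) = k%:R *: (const_mx 1 : 'M[int]_n) &
      (const_mx 1 : 'M[int]_n) *m A = k%:R *: (const_mx 1 : 'M[int]_n)].

Definition Mmat (F : finFieldType) (a : F) (i j : 'I_3) : F :=
  match nat_of_ord i, nat_of_ord j with
  | O, O => 1 | O, S O => a ^+ 2 | O, _ => a
  | S O, O => a ^- 2 | S O, S O => 1 | S O, _ => a^-1
  | _, O => a^-1 | _, S O => a | _, _ => 1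
  end.

(* Block matrix whose (i,j) block is C_{M_ij}, with e = 3; vertices ('I_3 * F). *)
Definition block_rel (F : finFieldType) (gamma a : F) (u w : 'I_3 * F) : bool :=
  Centry gamma 3 (Mmat a u.1 w.1) u.2 w.2.

(* Main.v *)
Require Import Defs.
From mathcomp Require Import all_boot all_order all_algebra all_field.
From mathcomp Require Import ring zify.
Set Implicit Arguments. Unset Strict Implicit. Unset Printing Implicit Defensive.
Import GRing.Theory.
Local Open Scope ring_scope.

Lemma m_gt0 (F : finFieldType) (m : nat) : #|F| = (3 * m + 1)%N -> (0 < m)%N.
Proof. move=> hq; have := card_finNzRing_gt1 F; rewrite hq; lia. Qed.

Lemma nz_pow1 (F : finFieldType) (m : nat) (t : F) :
  #|F| = (3 * m + 1)%N -> t != 0 -> t ^+ (3 * m) = 1.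
Proof.
move=> hq tn0; have := expf_card t; rewrite hq addn1 exprS.
move=> /(congr1 (fun u => t^-1 * u)); rewrite mulrA mulVf // mul1r => ->.
by [].
Qed.

Lemma gamma_nz (F : finFieldType) (m : nat) (gamma : F) :
  #|F| = (3 * m + 1)%N -> (#|F|.-1).-primitive_root gamma -> gamma != 0.
Proof.
move=> hq hg; apply/eqP=> g0; have := prim_expr_order hg; rewrite g0 expr0n.
rewrite hq addn1 /=; have mg := m_gt0 hq.
rewrite (_ : (3 * m == 0)%N = false); last by apply/negbTE; lia.
move=> h; have := @oner_neq0 F; by rewrite -h eqxx.
Qed.

Lemma powD (F : finFieldType) (m : nat) (gamma : F) (k : nat) :
  #|F| = (3 * m + 1)%N -> (#|F|.-1).-primitive_root gamma ->
  (gamma ^+ (3 * k) != 0) && ((gamma ^+ (3 * k)) ^+ m == 1).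
Proof.
move=> hq hg; rewrite expf_neq0 ?(gamma_nz hq hg) //=.
rewrite -exprM mulnAC exprM.
have := prim_expr_order hg; rewrite hq addn1 /= => ->.
by rewrite expr1n.
Qed.

Lemma powD_inv (F : finFieldType) (m : nat) (gamma t : F) :
  #|F| = (3 * m + 1)%N -> (#|F|.-1).-primitive_root gamma ->
  t != 0 -> t ^+ m = 1 -> exists k : 'I_m, t = gamma ^+ (3 * k).
Proof.
move=> hq hg tn0 tm.
have hg' := hg; rewrite hq addn1 /= in hg'.
have [i ti] := prim_rootP hg' (nz_pow1 hq tn0).
move: tm; rewrite ti -exprM => /eqP; rewrite -(prim_order_dvd hg').
rewrite dvdn_pmul2r ?(m_gt0 hq) // => /dvdnP [c hc].
have hi := ltn_ord i.
have cm : (c < m)%N by lia.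
by exists (Ordinal cm); rewrite /= hc mulnC.
Qed.

Lemma memD (F : finFieldType) (m : nat) (gamma t : F) :
  #|F| = (3 * m + 1)%N -> (#|F|.-1).-primitive_root gamma ->
  (t \in cyc_class gamma 3 0) = (t != 0) && (t ^+ m == 1).
Proof.
move=> hq hg; rewrite inE; apply/existsP/idP.
  by case=> k /eqP ->; rewrite add0n powD.
case/andP=> tn0 /eqP tm; have [k ->] := powD_inv hq hg tn0 tm.
have km : (k < #|F|)%N by rewrite hq; have := ltn_ord k; lia.
by exists (Ordinal km).
Qed.

Lemma cardD (F : finFieldType) (m : nat) (gamma : F) :
  #|F| = (3 * m + 1)%N -> (#|F|.-1).-primitive_root gamma ->
  #|cyc_class gamma 3 0| = m.
Proof.
move=> hq hg.
have -> : cyc_class gamma 3 0 = [set gamma ^+ (3 * val k) | k : 'I_m].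
  apply/setP=> t; rewrite (memD _ hq hg); apply/idP/imsetP.
    by case/andP=> tn0 /eqP tm; have [k ->] := powD_inv hq hg tn0 tm; exists k.
  by case=> k _ ->; rewrite powD.
rewrite card_imset ?card_ord // => i j /eqP.
have hg' := hg; rewrite hq addn1 /= in hg'.
rewrite (eq_prim_root_expr hg') !modn_small; last 2 first.
- rewrite ltn_pmul2l //; exact: ltn_ord.
- rewrite ltn_pmul2l //; exact: ltn_ord.
by rewrite eqn_pmul2l // => h; apply/val_inj/eqP.
Qed.
Lemma a_props (F : finFieldType) (m : nat) (gamma a : F) :
  #|F| = (3 * m + 1)%N -> (#|F|.-1).-primitive_root gamma ->
  a \in cyc_class gamma 3 1 :|: cyc_class gamma 3 2 ->
  (a != 0) && (a ^+ m != 1).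
Proof.
move=> hq hg ha.
have hg' := hg; rewrite hq addn1 /= in hg'.
have gn0 := gamma_nz hq hg.
have H : forall i k, (i = 1 \/ i = 2)%N ->
    (gamma ^+ (i + 3 * k) != 0) && ((gamma ^+ (i + 3 * k)) ^+ m != 1).
  move=> i k hi; rewrite expf_neq0 //= -exprM -(prim_order_dvd hg').
  rewrite dvdn_pmul2r ?(m_gt0 hq) //.
  by apply/negP => /dvdnP [c hc]; case: hi => hi; subst i; lia.
move: ha; rewrite in_setU !inE => /orP [] /existsP [k0 /eqP ->]; apply: H; by [left|right].
Qed.

Lemma cube_cases (F : fieldType) (w c : F) :
  w ^+ 3 = 1 -> w != 1 -> c ^+ 3 = 1 -> [\/ c = 1, c = w | c = w ^+ 2].
Proof.
move=> w3 w1 c3.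
have s0 : 1 + w + w ^+ 2 = 0.
  have : (w - 1) * (1 + w + w ^+ 2) = 0.
    have -> : (w - 1) * (1 + w + w ^+ 2) = w ^+ 3 - 1 by ring.
    by rewrite w3 subrr.
  by move/eqP; rewrite mulf_eq0 subr_eq0 (negbTE w1) /= => /eqP.
have : (c - 1) * (c - w) * (c - w ^+ 2) = 0.
  have -> : (c - 1) * (c - w) * (c - w ^+ 2) =
     c ^+ 3 - (1 + w + w ^+ 2) * c ^+ 2 + (w + w ^+ 2 + w ^+ 3) * c - w ^+ 3 by ring.
  rewrite w3 c3 s0.
  have -> : w + w ^+ 2 + 1 = 0 by rewrite -s0; ring.
  by rewrite mul0r mul0r subr0 addr0 subrr.
move/eqP; rewrite !mulf_eq0 !subr_eq0 => /orP [/orP [] |] /eqP ->;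
  by [constructor 1 | constructor 2 | constructor 3].
Qed.

Lemma partD (F : finFieldType) (m : nat) (gamma a t : F) :
  #|F| = (3 * m + 1)%N -> (#|F|.-1).-primitive_root gamma ->
  a \in cyc_class gamma 3 1 :|: cyc_class gamma 3 2 -> t != 0 ->
  addn (addn (a * t \in cyc_class gamma 3 0) (a^-1 * t \in cyc_class gamma 3 0))
    (t \in cyc_class gamma 3 0) = 1%N.
Proof.
move=> hq hg ha tn0.
have /andP [an0 w1] := a_props hq hg ha.
rewrite !(memD _ hq hg) !mulf_neq0 ?invr_eq0 //= tn0 /=.
rewrite !exprMn exprVn.
set w := a ^+ m; set c := t ^+ m.
have w3 : w ^+ 3 = 1 by rewrite /w -exprM mulnC nz_pow1.
have c3 : c ^+ 3 = 1 by rewrite /c -exprM mulnC nz_pow1.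
have wn0 : w != 0 by rewrite expf_neq0.
have w21 : w ^+ 2 != 1.
  apply: contra w1 => /eqP h; apply/eqP.
  by move: w3; rewrite exprS h mulr1.
have wi : w^-1 = w ^+ 2.
  by apply: (mulfI wn0); rewrite mulfV // -exprS w3.
rewrite wi.
have [-> | -> | ->] := cube_cases w3 w1 c3.
- by rewrite !mulr1 (negbTE w1) (negbTE w21) eqxx.
- by rewrite -expr2 -exprSr (negbTE w21) w3 eqxx (negbTE w1).
- rewrite -exprS w3 eqxx -exprD.
  have -> : w ^+ (2 + 2) = w by rewrite (exprD _ 3 1) w3 mul1r.
  by rewrite (negbTE w1) (negbTE w21).
Qed.

Definition sv (F : finFieldType) (a : F) (i : 'I_3) : F :=
  match nat_of_ord i with O => a | S O => a^-1 | _ => 1 end.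

Lemma sv_neq0 (F : finFieldType) (a : F) i : a != 0 -> sv a i != 0.
Proof.
move=> an0; case: i => [[|[|[|i]]] Hi] //=; by rewrite ?invr_eq0 ?oner_eq0.
Qed.

Lemma Mmat_sv (F : finFieldType) (a : F) i j : a != 0 -> Mmat a i j = sv a i / sv a j.
Proof.
move=> an0.
case: i => [[|[|[|i]]] Hi] //; case: j => [[|[|[|j]]] Hj] //;
  rewrite /Mmat /sv /=; field; by rewrite ?an0 ?oner_eq0.
Qed.

Lemma sum_pair (I J : finType) (G : I * J -> nat) :
  (\sum_v G v = \sum_i \sum_j G (i, j))%N.
Proof. by rewrite pair_bigA; apply: eq_bigr => -[i j]. Qed.

Lemma sumP (F : finFieldType) (m : nat) (gamma : F) (h : F -> F) :
  #|F| = (3 * m + 1)%N -> (#|F|.-1).-primitive_root gamma -> injective h ->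
  (\sum_y (h y \in cyc_class gamma 3 0 : nat))%N = m.
Proof.
move=> hq hg hi.
rewrite -(reindex_inj (P := xpredT) (F := fun y => (y \in cyc_class gamma 3 0 : nat)) hi) /=.
rewrite -(cardD hq hg) -sum1_card [RHS]big_mkcond.
by apply: eq_bigr => y _; case: (y \in _).
Qed.

Lemma sum3 (G : 'I_3 -> nat) :
  (\sum_k G k = G (@Ordinal 3 0 isT) + G (@Ordinal 3 1 isT) + G (@Ordinal 3 2 isT))%N.
Proof. rewrite !big_ord_recl big_ord0 addn0 addnA; by congr (G _ + G _ + G _); apply: val_inj. Qed.

Lemma Mmat_neq0 (F : finFieldType) (a : F) i j : a != 0 -> Mmat a i j != 0.
Proof. by move=> an0; rewrite Mmat_sv // mulf_neq0 ?invr_eq0 ?sv_neq0. Qed.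

Lemma row_sum (F : finFieldType) (m : nat) (gamma a : F) u :
  #|F| = (3 * m + 1)%N -> (#|F|.-1).-primitive_root gamma ->
  a \in cyc_class gamma 3 1 :|: cyc_class gamma 3 2 ->
  (\sum_v (block_rel gamma a u v : nat))%N = (3 * m)%N.
Proof.
move=> hq hg ha; have /andP [an0 _] := a_props hq hg ha.
rewrite sum_pair (eq_bigr (fun _ => m)); last first.
  move=> k _; rewrite /block_rel /Centry /=; apply: sumP => // y1 y2 e.
  apply: (mulfI (Mmat_neq0 u.1 k an0)); apply: oppr_inj; exact: (addrI u.2).
rewrite big_const_ord /=; lia.
Qed.

Lemma col_sum (F : finFieldType) (m : nat) (gamma a : F) w :
  #|F| = (3 * m + 1)%N -> (#|F|.-1).-primitive_root gamma ->
  a \in cyc_class gamma 3 1 :|: cyc_class gamma 3 2 ->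
  (\sum_v (block_rel gamma a v w : nat))%N = (3 * m)%N.
Proof.
move=> hq hg ha; have /andP [an0 _] := a_props hq hg ha.
rewrite sum_pair (eq_bigr (fun _ => m)); last first.
  move=> k _; rewrite /block_rel /Centry /=; apply: sumP => // y1 y2 e.
  exact: (addIr _ e).
rewrite big_const_ord /=; lia.
Qed.

Lemma diag0 (F : finFieldType) (m : nat) (gamma a : F) u :
  #|F| = (3 * m + 1)%N -> (#|F|.-1).-primitive_root gamma ->
  block_rel gamma a u u = false.
Proof.
move=> hq hg; rewrite /block_rel /Centry (memD _ hq hg).
have -> : Mmat a u.1 u.1 = 1 by case: u => -[[|[|[|i]]] Hi] //.
by rewrite mul1r subrr eqxx.
Qed.

Lemma sq_sum (F : finFieldType) (m : nat) (gamma a : F) u w :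
  #|F| = (3 * m + 1)%N -> (#|F|.-1).-primitive_root gamma ->
  a \in cyc_class gamma 3 1 :|: cyc_class gamma 3 2 ->
  (\sum_v (block_rel gamma a u v * block_rel gamma a v w : nat)
     + block_rel gamma a u w)%N = m.
Proof.
move=> hq hg ha; have /andP [an0 _] := a_props hq hg ha.
case: u => i x; case: w => j z.
set D := cyc_class gamma 3 0.
have si := sv_neq0 i an0; have sj := sv_neq0 j an0.
set W := x / sv a i - z / sv a j.
rewrite sum_pair /block_rel /Centry /=.
rewrite (eq_bigr (fun k => \big[addn/0%N]_r muln (sv a i * (W - r) \in D) (sv a k * r \in D)));
  last first.
  move=> k _; have sk := sv_neq0 k an0.
  have hinj : injective (fun r => sv a k * (z / sv a j + r)).
    by move=> r1 r2 /(mulfI sk) /addrI.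
  rewrite (reindex_inj hinj) /=; apply: eq_bigr => r _.
  rewrite !Mmat_sv //.
  have -> : x - sv a i / sv a k * (sv a k * (z / sv a j + r)) = sv a i * (W - r).
    by rewrite /W; field; rewrite sk si sj.
  have -> : sv a k * (z / sv a j + r) - sv a k / sv a j * z = sv a k * r.
    by field; rewrite sj.
  by [].
rewrite exchange_big /=.
rewrite (eq_bigr (fun r => muln (sv a i * (W - r) \in D) (r != 0))); last first.
  move=> r _; rewrite -big_distrr /=; congr (_ * _)%N.
  rewrite sum3 /sv /=.
  have [->|rn0] := eqVneq r 0.
    by rewrite !mulr0 /D (memD _ hq hg) eqxx.
  by rewrite mul1r; exact: (partD hq hg ha rn0).
have E1 : \big[addn/0%N]_r nat_of_bool (sv a i * (W - r) \in D) = m.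
  apply: sumP => // r1 r2 /(mulfI si) /addrI; exact: oppr_inj.
have -> : x - Mmat a i j * z = sv a i * (W - 0).
  by rewrite Mmat_sv // /W; field; rewrite si sj.
rewrite -E1 (bigD1 0) //= [RHS](bigD1 0) //= eqxx muln0 add0n addnC.
congr (_ + _)%N; apply: eq_bigr => r rn0; by rewrite rn0 muln1.
Qed.

Lemma sum_enum (V : finType) (G : V -> nat) :
  \sum_(l < #|V|) ((G (enum_val l))%:R : int) = (\sum_v G v)%:R.
Proof.
by rewrite natr_sum [RHS](reindex _ (onW_bij _ (enum_val_bij V))).
Qed.

Theorem mainTheorem9 (F : finFieldType) (m : nat) (gamma a : F) :
  #|F| = (3 * m + 1)%N ->
  (#|F|.-1).-primitive_root gamma ->
  a \in cyc_class gamma 3 1 :|: cyc_class gamma 3 2 ->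
  is_dsrg (adj_mx (block_rel gamma a))
    (3 * (3 * m + 1)) (3 * m) m (m - 1) m.
Proof.
move=> hq hg ha.
have mg := m_gt0 hq.
set R := block_rel gamma a.
split.
- by rewrite card_prod card_ord hq.
- split=> [p q|p]; rewrite mxE; first by case: (R _ _); [right|left].
  by rewrite /R (diag0 _ _ hq hg).
- apply/matrixP => p q; rewrite !mxE.
  rewrite (eq_bigr (fun l => ((R (enum_val p) (enum_val l) * R (enum_val l) (enum_val q))%N)%:R));
    last by move=> l _; rewrite !mxE -natrM.
  rewrite (sum_enum (fun v => muln (R (enum_val p) v) (R v (enum_val q)))).
  have := sq_sum (enum_val p) (enum_val q) hq hg ha.
  rewrite -/R; move: (R (enum_val p) (enum_val q)) => b.
  move: (\sum_v _)%N => S.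
  move=> h; case: (p == q); case: b h => /= h; rewrite ?mulr1n ?mulr0n ?mulr1 ?mulr0; lia.
- apply/matrixP => p q; rewrite !mxE mulr1.
  rewrite (eq_bigr (fun l => (R (enum_val p) (enum_val l) : nat)%:R));
    last by move=> l _; rewrite !mxE mulr1.
  rewrite (sum_enum (fun v => nat_of_bool (R (enum_val p) v))).
  by rewrite (row_sum _ hq hg ha).
- apply/matrixP => p q; rewrite !mxE mulr1.
  rewrite (eq_bigr (fun l => (R (enum_val l) (enum_val q) : nat)%:R));
    last by move=> l _; rewrite !mxE mul1r.
  rewrite (sum_enum (fun v => nat_of_bool (R v (enum_val q)))).
  by rewrite (col_sum _ hq hg ha).
Qed.
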